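(* Let $ABC$ be a triangle and let $P$ be a point. Let $H_A, H_B, H_C$ be the orthocenters of the triangles $BPC$, $CPA$, $PAB$ respectively, and let $\triangle_A, \triangle_B, \triangle_C$ denote the triangles $AH_BH_C$, $BH_CH_A$, $CH_AH_B$ respectively. Then $\triangle_A, \triangle_B, \triangle_C$ have a common orthocenter.
   Context: All triangles involved are assumed nondegenerate so that their orthocenters are defined. *)

(* Defs.v *)
From HB Require Import structures.
From mathcomp Require Import all_boot all_order all_algebra.
Set Implicit Arguments. Unset Strict Implicit. Unset Printing Implicit Defensive.
Import Order.TTheory GRing.Theory Num.Theory.
Local Open Scope ring_scope.

Definition point (R : realFieldType) := (R * R)%type.

Definition dotv (R : realFieldType) (X Y U V : point R) : R :=
  (Y.1 - X.1) * (V.1 - U.1) + (Y.2 - X.2) * (V.2 - U.2).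

Definition nondeg_triangle (R : realFieldType) (A B C : point R) : Prop :=
  (B.1 - A.1) * (C.2 - A.2) - (B.2 - A.2) * (C.1 - A.1) != 0.

Definition is_orthocenter (R : realFieldType) (H A B C : point R) : Prop :=
  [/\ dotv A H B C = 0, dotv B H C A = 0 & dotv C H A B = 0].

(* Main.v *)
Require Import Defs.
From HB Require Import structures.
From mathcomp Require Import all_boot all_order all_algebra.
From mathcomp Require Import ring lra.
Set Implicit Arguments. Unset Strict Implicit. Unset Printing Implicit Defensive.
Import Order.TTheory GRing.Theory Num.Theory.
Local Open Scope ring_scope.

Definition ndet (R : realFieldType) (X Y Z : point R) : R :=
  (Y.1 - X.1) * (Z.2 - X.2) - (Y.2 - X.2) * (Z.1 - X.1).

Definition orthf (R : realFieldType) (X Y Z : point R) : point R :=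
  let a := Z.1 - Y.1 in let b := Z.2 - Y.2 in
  let e := X.1 * a + X.2 * b in
  let c := X.1 - Z.1 in let d := X.2 - Z.2 in
  let f := Y.1 * c + Y.2 * d in
  ((e*d - b*f) / ndet X Y Z, (a*f - e*c) / ndet X Y Z).

Lemma lin_comb (R : realFieldType) (x y E1 E2 k1 k2 : R) :
  E1 = 0 -> E2 = 0 -> x - y = k1 * E1 + k2 * E2 -> x = y.
Proof. by move=> -> -> h; apply/eqP; rewrite -subr_eq0 h !mulr0 addr0. Qed.

Lemma orthfP (R : realFieldType) (H X Y Z : point R) :
  nondeg_triangle X Y Z -> is_orthocenter H X Y Z -> H = orthf X Y Z.
Proof.
case: H X Y Z => [h1 h2] [x1 x2] [y1 y2] [z1 z2].
rewrite /nondeg_triangle /is_orthocenter /orthf /ndet /dotv /= => nd [e1 e2 e3].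
congr pair; apply: (mulIf nd); rewrite divfK //.
  by apply: (lin_comb e1 e2 (k1 := x2 - z2) (k2 := -(z2 - y2))); ring.
by apply: (lin_comb e1 e2 (k1 := -(x1 - z1)) (k2 := (z1 - y1))); ring.
Qed.

Lemma orthf_is (R : realFieldType) (X Y Z : point R) :
  nondeg_triangle X Y Z -> is_orthocenter (orthf X Y Z) X Y Z.
Proof.
case: X Y Z => [x1 x2] [y1 y2] [z1 z2].
rewrite /nondeg_triangle /is_orthocenter /orthf /ndet /dotv /= => nd.
split; field; exact: nd.
Qed.

Lemma nz_aux (R : realFieldType) (x y d2 d3 : R) :
  d2 != 0 -> d3 != 0 -> y != 0 -> y = x / (d2*d3) -> x != 0.
Proof. by move=> h2 h3 hy e; apply: contraNneq hy => hx; rewrite e hx mul0r. Qed.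

Theorem proposition2p1 (R : realFieldType) (A B C P HA HB HC : point R) :
  nondeg_triangle A B C ->
  nondeg_triangle B P C -> nondeg_triangle C P A -> nondeg_triangle P A B ->
  is_orthocenter HA B P C -> is_orthocenter HB C P A -> is_orthocenter HC P A B ->
  nondeg_triangle A HB HC -> nondeg_triangle B HC HA -> nondeg_triangle C HA HB ->
  exists H : point R,
    [/\ is_orthocenter H A HB HC, is_orthocenter H B HC HA
      & is_orthocenter H C HA HB].
Proof.
move=> n0 n1 n2 n3 oA oB oC n4 n5 n6.
rewrite (orthfP n1 oA) (orthfP n2 oB) (orthfP n3 oC) in n4 n5 n6 *.
exists (orthf A (orthf C P A) (orthf P A B)); split; first exact: orthf_is.
  move: n1 n2 n3 n4 {n0 n5 n6 oA oB oC}.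
  case: A B C P => [a1 a2] [b1 b2] [c1 c2] [p1 p2].
  rewrite /nondeg_triangle /is_orthocenter /orthf /ndet /dotv /= => n1 n2 n3 n4.
  split; field; rewrite n1 n2 n3 /=; apply: (nz_aux n2 n3 n4); field; rewrite ?n2 ?n3 //.
move: n1 n2 n3 n4 {n0 n5 n6 oA oB oC}.
case: A B C P => [a1 a2] [b1 b2] [c1 c2] [p1 p2].
rewrite /nondeg_triangle /is_orthocenter /orthf /ndet /dotv /= => n1 n2 n3 n4.
split; field; rewrite n1 n2 n3 /=; apply: (nz_aux n2 n3 n4); field; rewrite ?n2 ?n3 //.
Qed.
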